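(* Fix integers $q\ge 1$ and $k\ge 4$, and let $G(q,k)$ be the graph on vertex set $\{v_0,v_1,\ldots,v_{kq}\}$ in which, with all indices taken modulo $kq+1$, the neighbourhood of $v_i$ is $$\{v_{i-1},v_{i+1}\}\cup\{v_{i+kj+m} : m=2,3,\ldots,k-1,\ j=0,1,\ldots,q-1\}.$$ Then $G(q,k)$ is $2K_2$-free.
   Context: $2K_2$ denotes the disjoint union of two copies of $K_2$ (i.e. two disjoint edges with no edges between them). A graph is $H$-free if it contains no induced subgraph isomorphic to $H$. *)

(* Defs.v *)
From mathcomp Require Import all_boot.
Set Implicit Arguments. Unset Strict Implicit. Unset Printing Implicit Defensive.

Definition Gqk_adj (q k : nat) : rel 'I_(k * q + 1) :=
  fun x y =>
    let n := k * q + 1 in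
    [|| val y == (x + 1) %% n,
        val y == (x + n - 1) %% n
      | [exists j : 'I_q, exists m : 'I_k,
           (2 <= m) && (val y == (x + k * j + m) %% n)]].

Arguments Gqk_adj q k : clear implicits.

Definition twoK2_free (T : finType) (e : rel T) : Prop :=
  ~ exists a b c d : T,
      [/\ uniq [:: a; b; c; d], e a b, e c d &
          [/\ ~~ e a c, ~~ e a d, ~~ e b c & ~~ e b d]].

(* Main.v *)
Require Import Defs.
From mathcomp Require Import all_boot.
From mathcomp Require Import zify.

Lemma mod2 n a : a < n + n -> a %% n = if a < n then a else a - n.
Proof.
case: ifP => h; first by rewrite modn_small.
move=> h2; have -> : a = (a - n) + n by lia.
by rewrite modnDr modn_small; lia.
Qed.

Lemma modk_eq k A B x y : k*A + x = k*B + y -> x %% k = y %% k.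
Proof. by move/(congr1 (modn^~ k)); rewrite /= !(mulnC k) !modnMDl. Qed.

Definition inS (q k s : nat) : bool :=
  [|| s == 1, s == k * q
    | [exists j : 'I_q, exists m : 'I_k, (2 <= m) && (s == k * j + m)]].

Definition D n (x y : nat) := (y + n - x) %% n.

Lemma shiftE n x y t : x < n -> y < n -> t < n ->
  (y == (x + t) %% n) = (D n x y == t).
Proof.
move=> hx hy ht; rewrite /D (mod2 _ (x + t)); last lia.
rewrite (mod2 _ (y + n - x)); last lia.
case: ifP => h1; case: ifP => h2; apply/idP/idP => /eqP ?; apply/eqP; lia.
Qed.

Lemma adjE q k (x y : 'I_(k * q + 1)) : 1 <= q -> 1 <= k ->
  Gqk_adj q k x y = inS q k (D (k * q + 1) x y).
Proof.
move=> hq hk; have hkq : 0 < k * q by rewrite muln_gt0; lia. rewrite /Gqk_adj /inS.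
have hx := ltn_ord x; have hy := ltn_ord y.
rewrite shiftE //; last lia.
have -> : x + (k * q + 1) - 1 = x + k * q by lia.
rewrite shiftE //; last lia.
congr [|| _, _ | _].
apply: eq_existsb => j; apply: eq_existsb => m.
rewrite -addnA shiftE //.
have hj := ltn_ord j; have hm := ltn_ord m.
have : k * j.+1 <= k * q by rewrite leq_mul2l hj orbT.
rewrite mulnS; lia.
Qed.

Lemma D0 n (x y : nat) : x < n -> y < n -> x != y -> D n x y != 0.
Proof.
move=> hx hy /eqP hxy; rewrite /D mod2; last lia.
case: ifP => h; apply/eqP; lia.
Qed.

Lemma Dcomp n x y z : x < n -> y < n -> z < n ->
  D n y z = (D n x z + n - D n x y) %% n.
Proof.
move=> hx hy hz; rewrite /D (mod2 _ (z + n - x)); last lia.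
rewrite (mod2 _ (y + n - x)); last lia.
rewrite (mod2 _ (z + n - y)); last lia.
case: ifP => h1; case: ifP => h2; case: ifP => h3;
  rewrite mod2; try lia; case: ifP => h4; lia.
Qed.

Lemma S_char q k s : inS q k s ->
  [\/ s = 1, s = k * q | exists J m, [/\ s = k * J + m, 2 <= m & m < k]].
Proof.
case/or3P => [/eqP->|/eqP->|/existsP [j /existsP [m /andP [hm /eqP ->]]]].
- by constructor 1.
- by constructor 2.
- constructor 3; exists j, m; split => //; exact: ltn_ord.
Qed.

Lemma N_char q k s : 1 <= q -> 4 <= k -> s < k * q + 1 -> s != 0 -> ~~ inS q k s ->
  exists j e, [/\ s = k * j + e, 1 <= j, j <= q - 1 & e <= 1].
Proof.
move=> hq hk hs hs0 hS.
have E := divn_eq s k.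
have hr : s %% k < k by rewrite ltn_mod; lia.
set j := s %/ k in E; set r := s %% k in E hr.
have Hr : r <= 1.
  case: (leqP r 1) => // h2.
  have hjq : j < q.
    case: (leqP q j) => // hqj.
    have : k * q <= k * j by rewrite leq_mul2l hqj orbT.
    lia.
  case/negP: hS; apply/orP; right; apply/orP; right.
  apply/existsP; exists (Ordinal hjq); apply/existsP; exists (Ordinal hr).
  rewrite /= h2 /=; apply/eqP; lia.
exists j, r; split => //; try lia.
- case: (posnP j) => [j0|]; last lia.
  case/negP: hS; apply/orP; left; apply/eqP; lia.
- case: (leqP j (q - 1)) => // hqj.
  have : k * q <= k * j by rewrite leq_mul2l; apply/orP; right; lia.
  move=> hh; case/negP: hS; apply/orP; right; apply/orP; left; apply/eqP; lia.
Qed.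

Ltac modk H k :=
  let h := fresh "hm" in
  have h := @modk_eq _ _ _ _ _ H;
  rewrite (mod2 k _) in h; [|lia];
  rewrite (mod2 k _) in h; [|lia];
  move: h; case: ifP => ?; case: ifP => ?; lia.

Section Core.
Variables (q k : nat) (hq : 1 <= q) (hk : 4 <= k).
Let n := k * q + 1.

Lemma off s u j e i f (g : nat) :
  s < n -> u < n -> s != 0 ->
  u = k * j + e -> 1 <= j -> j <= q - 1 -> e <= 1 ->
  (u + n - s) %% n = k * i + f -> f <= 1 ->
  (s = 1 -> e = 1) /\ (s = k * q -> e = 0) /\
  (forall J m, s = k * J + m -> 2 <= m -> m < k -> e = (m == 2)).
Proof.
rewrite /n.
move=> hs hu hs0 hu' hj1 hj2 he hv hf.
have kj : k <= k * j by rewrite leq_pmulr.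
have kq : k <= k * q by rewrite leq_pmulr.
rewrite mod2 in hv; last lia.
move: hv; case: ifP => h1 hv.
- split; [move=> es; lia|split].
  + move=> es.
    have H : k * j + (e + 1) = k * i + f by lia.
    modk H k.
  + move=> J m es hm2 hmk.
    have H : k * (j + q) + (e + 1) = k * (i + J) + (f + m) by lia.
    case: (m =P 2) => [m2|m2] /=; modk H k.
- split; [move=> es|split].
  + have H : k * j + e = k * i + (f + 1) by lia.
    modk H k.
  + move=> es.
    have : k * j.+1 <= k * q by rewrite leq_mul2l; apply/orP; right; lia.
    rewrite mulnS; lia.
  + move=> J m es hm2 hmk.
    have H : k * j + e = k * (i + J) + (f + m) by lia.
    case: (m =P 2) => [m2|m2] /=; modk H k.
Qed.

Lemma final u w j1 j2 e : u < n -> w < n -> u != w ->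
  u = k * j1 + e -> 1 <= j1 -> j1 <= q - 1 ->
  w = k * j2 + e -> 1 <= j2 -> j2 <= q - 1 -> e <= 1 ->
  ~~ inS q k ((w + n - u) %% n).
Proof.
rewrite /n.
move=> hu hw huw hu' ha1 ha2 hw' hb1 hb2 he; apply/negP => /S_char.
have kj1 : k <= k * j1 by rewrite leq_pmulr.
have kj2 : k <= k * j2 by rewrite leq_pmulr.
have kq : k <= k * q by rewrite leq_pmulr.
rewrite mod2; last lia.
case: ifP => h1.
- case=> [es|es|[J [m [es hm2 hmk]]]].
  + have H : k * (j2 + q) + (e + 1) = k * j1 + (e + 1) by lia.
    have : k * j1 < k * (j2 + q) by rewrite ltn_mul2l; apply/andP; split; lia.
    lia.
  + have H : k * (j2 + q) + (e + 1) = k * (j1 + q) + e by lia.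
    modk H k.
  + have H : k * (j2 + q) + (e + 1) = k * (j1 + J) + (e + m) by lia.
    modk H k.
- case=> [es|es|[J [m [es hm2 hmk]]]].
  + have H : k * j2 + e = k * j1 + (e + 1) by lia.
    modk H k.
  + have : k * j2 < k * (j1 + q) by rewrite ltn_mul2l; apply/andP; split; lia.
    lia.
  + have H : k * j2 + e = k * (j1 + J) + (e + m) by lia.
    modk H k.
Qed.

Lemma core s u w : s < n -> u < n -> w < n -> s != 0 -> u != 0 -> w != 0 ->
  u != w -> inS q k s -> ~~ inS q k u -> ~~ inS q k w ->
  ~~ inS q k ((u + n - s) %% n) -> (u + n - s) %% n != 0 ->
  ~~ inS q k ((w + n - s) %% n) -> (w + n - s) %% n != 0 ->
  ~~ inS q k ((w + n - u) %% n).
Proof.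
move=> hs hu hw hs0 hu0 hw0 huw hS hU hW hV1 hV10 hV2 hV20.
have hv1 : (u + n - s) %% n < n by rewrite ltn_mod /n; lia.
have hv2 : (w + n - s) %% n < n by rewrite ltn_mod /n; lia.
have [j1 [e1 [E1 a1 a2 a3]]] := @N_char q k _ hq hk hu hu0 hU.
have [j2 [e2 [E2 b1 b2 b3]]] := @N_char q k _ hq hk hw hw0 hW.
have [i1 [f1 [F1 c1 c2 c3]]] := @N_char q k _ hq hk hv1 hV10 hV1.
have [i2 [f2 [F2 d1 d2 d3]]] := @N_char q k _ hq hk hv2 hV20 hV2.
have [O1 [O2 O3]] := @off _ _ _ _ _ _ 0 hs hu hs0 E1 a1 a2 a3 F1 c3.
have [P1 [P2 P3]] := @off _ _ _ _ _ _ 0 hs hw hs0 E2 b1 b2 b3 F2 d3.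
have ee : e1 = e2.
  case/S_char: hS => [es|es|[J [m [es hm2 hmk]]]].
  - by rewrite O1 // P1.
  - by rewrite O2 // P2.
  - by rewrite (O3 J m) // (P3 J m).
subst e2.
exact: (@final _ _ _ _ _ hu hw huw E1 a1 a2 E2 b1 b2 a3).
Qed.

End Core.

Theorem lemma2p3 (q k : nat) (hq : 1 <= q) (hk : 4 <= k) :
  twoK2_free (Gqk_adj q k).
Proof.
move=> [a [b [c [d [U ab cd [nac nad nbc nbd]]]]]].
move: U; rewrite /= !inE !negb_or.
case/and4P => /and3P [hab hac had] /andP [hbc hbd] hcd _.
have hk1 : 1 <= k by lia.
rewrite !adjE // in ab cd nac nad nbc nbd.
have ha := ltn_ord a; have hb := ltn_ord b; have hc := ltn_ord c; have hd := ltn_ord d.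
have Dbc := @D0 _ _ _ hb hc hbc; have Dbd := @D0 _ _ _ hb hd hbd; have Dcd := @D0 _ _ _ hc hd hcd.
have Dab := @D0 _ _ _ ha hb hab; have Dac := @D0 _ _ _ ha hc hac; have Dad := @D0 _ _ _ ha hd had.
have hn : 0 < k * q + 1 by lia.
rewrite (@Dcomp _ a _ _ ha hb hc) in nbc Dbc.
rewrite (@Dcomp _ a _ _ ha hb hd) in nbd Dbd.
rewrite (@Dcomp _ a _ _ ha hc hd) in cd Dcd.
have huw : D (k * q + 1) a c != D (k * q + 1) a d.
  apply/eqP => e; move: Dcd; rewrite e addKn modnn; by [].
have hs : D (k * q + 1) a b < k * q + 1 by rewrite ltn_mod.
have hu : D (k * q + 1) a c < k * q + 1 by rewrite ltn_mod.
have hw : D (k * q + 1) a d < k * q + 1 by rewrite ltn_mod.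
have := @core q k hq hk _ _ _ hs hu hw Dab Dac Dad huw ab nac nad nbc Dbc nbd Dbd.
by rewrite cd.
Qed.
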